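(* Let $p \geqslant 3$ be a prime and $d \geqslant 1$ with $p^d \geqslant 7$, let $V$ be a $d$-dimensional vector space over $\mathbb{F}_p$ with basis $\mathbf{b}_1,\ldots,\mathbf{b}_d$, let $G = \mathrm{Sym}(V)$, and let $T \leqslant \mathrm{GL}(V)$ be the group of matrices diagonal with respect to this basis. Let $l_2 = d$ if $p \in \{3,5\}$ and $l_2 = d\,\Omega(p-1)$ otherwise. Then there exist subsets $Y_1,\ldots,Y_{l_2} \subseteq G$ such that \[ T > \bigcap_{x \in Y_1} T^x > \bigcap_{x \in Y_2} T^x > \cdots > \bigcap_{x \in Y_{l_2}} T^x = 1. \]
   Context: $\Omega(k)$ is the number of prime factors of $k$ counted with multiplicity. $\mathrm{GL}(V)$ is regarded as a subgroup of $\mathrm{Sym}(V)$; inclusions $>$ are strict. *)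

(* Defs.v *)
From mathcomp Require Import all_boot all_order all_algebra all_fingroup.
Set Implicit Arguments. Unset Strict Implicit. Unset Printing Implicit Defensive.
Import GRing.Theory.

Definition Omega (k : nat) : nat := \sum_(q <- primes k) logn q k.

Notation Vec p d := 'rV['F_p]_d.

(* T: permutations of V given by v |-> v * D with D an invertible diagonal
   matrix (w.r.t. the standard basis), i.e. the diagonal subgroup of GL(V)
   viewed inside Sym(V). *)
Definition diagT (p d : nat) : {set {perm Vec p d}} :=
  [set s : {perm Vec p d} | [exists D : 'rV['F_p]_d,
      [forall i, D ord0 i != 0%R] && [forall v, s v == (v *m diag_mx D)%R]]].

Definition capconj (p d : nat) (Y : {set {perm Vec p d}}) : {set {perm Vec p d}} :=
  \bigcap_(x in Y) (diagT p d :^ x)%g.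

Definition l2 (p d : nat) : nat :=
  if (p == 3) || (p == 5) then d else d * Omega p.-1.

(* Main.v *)
Require Import Defs.
From mathcomp Require Import all_boot all_order all_algebra all_fingroup all_field.
From mathcomp Require Import cyclic ring zify.
Set Implicit Arguments. Unset Strict Implicit. Unset Printing Implicit Defensive.
Import GRing.Theory.
Local Open Scope ring_scope.
Lemma Fp_unit_exp (p : nat) (hp : prime p) (x : 'F_p) : x != 0 -> x ^+ p.-1 = 1.
Proof.
move=> x0; have e : x ^+ (p.-1).+1 = x.
  by rewrite (prednK (prime_gt0 hp)) -{2}(expf_card x) card_Fp.
by move: e; rewrite exprSr => e; apply: (mulIf x0); rewrite e mul1r.
Qed.

Lemma Fp_prim (p : nat) (hp : prime p) : exists g : 'F_p, (p.-1).-primitive_root g.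
Proof.
pose rs := enum [pred x : 'F_p | x != 0].
have p1 : (0 < p.-1)%N by rewrite -ltnS prednK ?prime_gt1 ?prime_gt0.
have H : has (p.-1).-primitive_root rs.
apply: has_prim_root => //.
- by apply/allP => x; rewrite mem_enum inE unity_rootE => x0; rewrite Fp_unit_exp.
- exact: enum_uniq.
- rewrite -cardE.
  have := cardC1 (0 : 'F_p); rewrite card_Fp //.
  by move=> <-; apply: subset_leq_card; apply/subsetP=> x; rewrite !inE.
by case/hasP: H => g _ hg; exists g.
Qed.


Lemma oneD (p m : nat) (hp : prime p) (a : 'F_p) : a != 0 -> a ^+ m != 1 ->
  (0 < m)%N -> (m %| p.-1)%N -> (m == 1)%N || (7 <= p)%N ->
  exists f : {perm 'F_p}, (forall b : 'F_p, b ^+ m = 1 -> forall z : 'F_p, f (b * z) = b * f z) /\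
     ~ (exists c : 'F_p, forall y : 'F_p, f (y * a) = f y * c).
Proof.
move=> a0 am m0 mdv.
have [em|m1] := eqVneq m 1%N.
  subst m; move=> _.
  have inj : injective (fun z : 'F_p => 1 - z).
    by move=> z1 z2 /= /addrI /oppr_inj.
  exists (perm inj); split.
    by move=> b; rewrite (expr1 b) => -> z; rewrite !mul1r.
  case=> c hc.
  have h0 := hc 0; have h1 := hc 1.
  rewrite !permE /= mul0r subr0 mul1r subrr mul0r in h0 h1.
  have c1 : c = 1 by rewrite h0 mul1r.
  move: h1; move/eqP; rewrite subr_eq0 => /eqP a1.
  by move: am; rewrite -a1 expr1n eqxx.
move=> /= p7.
have m2 : (2 <= m)%N by case: m m0 m1 {am mdv} => [|[|]].
have [g gp] := Fp_prim hp.
have p1 : (0 < p.-1)%N by rewrite -ltnS prednK ?prime_gt1 ?prime_gt0.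
have g0 : g != 0 by rewrite (prim_root_eq0 gp) -lt0n.
set h := g ^+ (p.-1 %/ m).
have hp' : m.-primitive_root h := dvdn_prim_root gp mdv.
have hm : h ^+ m = 1 := prim_expr_order hp'.
have h1 : h != 1.
  apply/eqP=> e; have := prim_order_dvd hp' 1; rewrite e expr1 eqxx.
  by move/dvdn_leq => /(_ isT); rewrite leqNgt m2.
have h0 : h != 0 by rewrite (prim_root_eq0 hp') -lt0n.
pose inB (z : 'F_p) := (z / a) ^+ m == 1.
have inBh z : inB (z * h) = inB z by rewrite /inB mulrAC exprMn hm mulr1.
pose f z := if inB z then z * h else z.
have finj : injective f.
  move=> z1 z2; rewrite /f; case: ifP => b1; case: ifP => b2.
  - exact: mulIf.
  - by move=> e; move: b2; rewrite -e inBh b1.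
  - by move=> e; move: b1; rewrite e inBh b2.
  - by [].
exists (perm finj); split.
  move=> b bm z; rewrite !permE /f.
  have -> : inB (b * z) = inB z by rewrite /inB -mulrA exprMn bm mul1r.
  by case: ifP => _; rewrite ?mulrA.
case=> c hc.
have inBa : inB a by rewrite /inB divff // expr1n.
have inB1 : inB 1 = false.
  by rewrite /inB mul1r exprVn invr_eq1 (negbTE am).
have e1 := hc 1; rewrite !permE /f mul1r inBa inB1 mul1r in e1.
have e2 := hc a^-1; rewrite !permE /f mulVf // inB1 -e1 in e2.
move: e2; case: ifP => bi e2.
  have hh : h ^+ 2 = 1.
    by rewrite e2; field.
  have [em2|m3] := eqVneq m 2%N; last first.
    have := prim_order_dvd hp' 2; rewrite hh eqxx => /(dvdn_leq (isT : (0 < 2)%N)).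
    by move=> le; move/eqP: m3; move: m2 le; clear; lia.
  subst m.
  have a4 : a ^+ 4 = 1.
    move/eqP: bi => bi.
    have -> : a ^+ 4 = (a ^+ 4) * (a^-1 / a) ^+ 2 by rewrite bi mulr1.
    by field.
  have g2 : g ^+ 2 != 1.
    rewrite -(prim_order_dvd gp); apply/negP => /(dvdn_leq (isT : (0 < 2)%N)).
    by rewrite -ltnS prednK ?prime_gt0 // leqNgt (leq_trans _ p7).
  have g4 : g ^+ 4 != 1.
    rewrite -(prim_order_dvd gp); apply/negP => /(dvdn_leq (isT : (0 < 4)%N)).
    by rewrite -ltnS prednK ?prime_gt0 // leqNgt (leq_trans _ p7).
  have e3 := hc g; rewrite !permE /f in e3.
  have gaf : inB (g * a) = false by rewrite /inB mulrK ?unitfE // (negbTE g2).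
  have gf : inB g = false.
    apply/negbTE; apply: contra g4 => /eqP ga.
    have -> : g ^+ 4 = ((g / a) ^+ 2) ^+ 2 * a ^+ 4 by field.
    by rewrite ga a4 expr1n mulr1.
  rewrite gaf gf -e1 in e3.
  have ga0 : g * a != 0 by rewrite mulf_neq0.
  have : g * a * h = g * a * 1 by rewrite mulr1 -mulrA -e3.
  by move/(mulfI ga0) => e; move: h1; rewrite e eqxx.
by move: h1; rewrite e2 mulrA mulVf // mul1r eqxx.
Qed.
Lemma mulD_entry (R : pzSemiRingType) (d : nat) (v D : 'rV[R]_d) (i : 'I_1) k :
  (v *m diag_mx D) i k = v ord0 k * D ord0 k.
Proof. by rewrite mul_mx_diag mxE (ord1 i). Qed.

Lemma diag_uniq (p d : nat) (D D' : 'rV['F_p]_d) :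
  (forall v : 'rV['F_p]_d, v *m diag_mx D = v *m diag_mx D') -> D = D'.
Proof.
move=> H; apply/rowP => k.
have := congr1 (fun w : 'rV['F_p]_d => w ord0 k) (H (const_mx 1)).
by rewrite /= !mulD_entry !mxE !mul1r.
Qed.

Definition xfun (p d : nat) (j : 'I_d) (f : {perm 'F_p}) (v : 'rV['F_p]_d) :
  'rV['F_p]_d := \row_k (if k == j then f (v ord0 k) else v ord0 k).

Lemma xfun_entry (p d : nat) (j : 'I_d) (f : {perm 'F_p}) (v : 'rV['F_p]_d) (i : 'I_1) k :
  xfun j f v i k = if k == j then f (v ord0 k) else v ord0 k.
Proof. by rewrite /xfun mxE. Qed.

Lemma xfun_inj (p d : nat) (j : 'I_d) (f : {perm 'F_p}) : injective (xfun j f).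
Proof.
move=> v w e; apply/rowP => k; have := congr1 (fun u : 'rV['F_p]_d => u ord0 k) e.
by rewrite /= !mxE; case: eqP => _ //; apply: perm_inj.
Qed.

Definition xperm (p d : nat) (j : 'I_d) (f : {perm 'F_p}) : {perm 'rV['F_p]_d} :=
  perm (@xfun_inj p d j f).

Lemma xperm1 (p d : nat) (j : 'I_d) : xperm j (1%g : {perm 'F_p}) = 1%g.
Proof.
apply/permP => v; rewrite permE perm1; apply/rowP => k; rewrite mxE perm1.
by case: eqP.
Qed.

Lemma conj_inv_apply (p d : nat) (t x : {perm 'rV['F_p]_d}) v :
  (t ^ x^-1)%g v = x^-1%g (t (x v)).
Proof. by rewrite conjgE invgK !permM. Qed.

Lemma lower (p d : nat) (t : {perm 'rV['F_p]_d}) (D : 'rV['F_p]_d) (j : 'I_d) (f : {perm 'F_p}) :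
  [forall k, D ord0 k != 0] -> (forall v, t v = v *m diag_mx D) ->
  (forall z, f (D ord0 j * z) = D ord0 j * f z) ->
  t \in (diagT p d :^ xperm j f)%g.
Proof.
move=> D0 tD fc; rewrite mem_conjg.
have -> : (t ^ (xperm j f)^-1)%g = t.
  apply/permP => v; rewrite conj_inv_apply.
  suff -> : t (xperm j f v) = xperm j f (t v) by rewrite permK.
  rewrite !tD !permE; apply/rowP => k.
  rewrite (mulD_entry (xfun j f v)) !xfun_entry (mulD_entry v).
  by case: eqP => [->|_] //; rewrite [v _ _ * _]mulrC fc mulrC.
rewrite inE; apply/existsP; exists D; rewrite D0 /=; apply/forallP => v.
by rewrite tD.
Qed.

Lemma upper (p d : nat) (t : {perm 'rV['F_p]_d}) (D : 'rV['F_p]_d) j (f : {perm 'F_p}) :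
  (forall v, t v = v *m diag_mx D) ->
  t \in (diagT p d :^ xperm j f^-1)%g ->
  exists c, forall y, f (y * D ord0 j) = f y * c.
Proof.
move=> tD; rewrite mem_conjg inE => /existsP [E /andP [_ /forallP hE]].
exists (E ord0 j) => y.
pose v : 'rV['F_p]_d := \row_k (if k == j then f y else 0).
have := hE v; rewrite conj_inv_apply => /eqP e.
have e2 : t (xperm j f^-1 v) = xperm j f^-1 (v *m diag_mx E).
  by rewrite -e permKV.
have := congr1 (fun u : 'rV['F_p]_d => u ord0 j) e2.
rewrite /= tD !permE (mulD_entry (xfun j f^-1 v)) !xfun_entry eqxx (mulD_entry v) /v mxE eqxx permK.
by move=> ->; rewrite permKV.
Qed.

Definition Yset (p d i m : nat) : {set {perm 'rV['F_p]_d}} :=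
  [set x | [exists j : 'I_d, [exists f : {perm 'F_p}, (x == xperm j f) &&
     ((j < i)%N || ((j == i :> nat) &&
        [forall b : 'F_p, (b ^+ m == 1) ==> [forall z : 'F_p, f (b * z) == b * f z]]))]]].

Definition condD (p d i m : nat) (D : 'rV['F_p]_d) : bool :=
  [forall k : 'I_d, ((k < i)%N ==> (D ord0 k == 1)) && ((k == i :> nat) ==> (D ord0 k ^+ m == 1))].

Definition Hset (p d i m : nat) : {set {perm 'rV['F_p]_d}} :=
  [set t : {perm 'rV['F_p]_d} | [exists D : 'rV['F_p]_d,
     [&& [forall k, D ord0 k != 0], [forall v, t v == v *m diag_mx D] & condD i m D]]].

Lemma Hset_memP (p d i m : nat) (t : {perm 'rV['F_p]_d}) (D : 'rV['F_p]_d) :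
  [forall k, D ord0 k != 0] -> (forall v, t v = v *m diag_mx D) ->
  (t \in Hset p d i m) = condD i m D.
Proof.
move=> D0 tD; apply/idP/idP.
  rewrite inE => /existsP [D' /and3P [_ /forallP tD' c]].
  suff -> : D = D' by [].
  by apply: diag_uniq => v; rewrite -tD; apply/eqP.
move=> c; rewrite inE; apply/existsP; exists D; rewrite D0 c andbT.
by apply/forallP => v; rewrite tD.
Qed.

Lemma Hset_sub (p d i m : nat) : Hset p d i m \subset diagT p d.
Proof.
apply/subsetP => t; rewrite !inE => /existsP [D /and3P [D0 tD _]].
by apply/existsP; exists D; rewrite D0 tD.
Qed.

Lemma capconjE (p d i m : nat) (hp : prime p) (hi : (i < d)%N) (m0 : (0 < m)%N)
  (mdv : (m %| p.-1)%N) (mc : (m == 1)%N || (7 <= p)%N) :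
  capconj (Yset p d i m) = Hset p d i m.
Proof.
apply/setP => t; apply/idP/idP.
- move/bigcapP => H.
  have Y1 : (1%g : {perm 'rV['F_p]_d}) \in Yset p d i m.
    rewrite inE; apply/existsP; exists (Ordinal hi); apply/existsP; exists 1%g.
    rewrite xperm1 eqxx /= ltnn eqxx /=; apply/forallP => b; apply/implyP=> _.
    by apply/forallP => z; rewrite !perm1.
  have := H _ Y1; rewrite conjsg1 inE => /existsP [D /andP [D0 /forallP tD]].
  have tD' : forall v, t v = v *m diag_mx D by move=> v; apply/eqP.
  rewrite (@Hset_memP p d i m t D D0 tD'); apply/forallP => k; apply/andP; split; apply/implyP => hk.
  + apply/negPn/negP => Dk1.
    have Dk : D ord0 k ^+ 1 != 1 by rewrite expr1.
    have [f [_ nf]] := @oneD p 1 hp (D ord0 k) (forallP D0 k) Dk isT (dvd1n _) isT.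
    apply: nf; apply: (upper tD'); apply: H.
    rewrite inE; apply/existsP; exists k; apply/existsP; exists f^-1%g.
    by rewrite eqxx hk.
  + apply/negPn/negP => Dk1.
    have [f [fe nf]] := @oneD p m hp (D ord0 k) (forallP D0 k) Dk1 m0 mdv mc.
    apply: nf; apply: (upper tD'); apply: H.
    rewrite inE; apply/existsP; exists k; apply/existsP; exists f^-1%g.
    rewrite eqxx hk /=; apply/orP; right; apply/forallP => b; apply/implyP => /eqP bm.
    apply/forallP => z; apply/eqP.
    have := fe b bm (f^-1%g z); rewrite permKV => <-.
    by rewrite permK.
- rewrite inE => /existsP [D /and3P [D0 /forallP tD c]].
  have tD' : forall v, t v = v *m diag_mx D by move=> v; apply/eqP.
  apply/bigcapP => x; rewrite inE => /existsP [j /existsP [f /andP [/eqP -> hc]]].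
  apply: (lower D0 tD'); have /andP [c1 c2] := forallP c j.
  case/orP: hc => [lt | /andP [eq /forallP fe]].
    by rewrite (eqP (implyP c1 lt)) => z; rewrite !mul1r.
  by move=> z; apply/eqP; have := fe (D ord0 j); rewrite (implyP c2 eq) => /forallP.
Qed.

Definition rowD (p d : nat) (j : 'I_d) (h : 'F_p) : 'rV['F_p]_d :=
  \row_k (if k == j then h else 1).

Lemma rowD0 (p d : nat) (hp : prime p) (j : 'I_d) (h : 'F_p) : h != 0 ->
  [forall k, rowD j h ord0 k != 0].
Proof.
move=> h0; apply/forallP => k; rewrite mxE; case: ifP => _ //.
Qed.

Lemma tw_ex (p d : nat) (hp : prime p) (j : 'I_d) (h : 'F_p) : h != 0 ->
  exists t : {perm 'rV['F_p]_d}, forall v, t v = v *m diag_mx (rowD j h).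
Proof.
move=> h0.
have inj : injective (fun v : 'rV['F_p]_d => v *m diag_mx (rowD j h)).
  move=> v w e; apply/rowP => k.
  have := congr1 (fun u : 'rV['F_p]_d => u ord0 k) e.
  rewrite /= (mulD_entry v) (mulD_entry w); apply: mulIf.
  exact: (forallP (rowD0 hp j h0) k).
by exists (perm inj) => v; rewrite permE.
Qed.

Lemma tw_mem (p d i m : nat) (hp : prime p) (j : 'I_d) (h : 'F_p) (h0 : h != 0)
   (t : {perm 'rV['F_p]_d}) :
  (forall v, t v = v *m diag_mx (rowD j h)) ->
  (t \in Hset p d i m) = ((j < i)%N ==> (h == 1)) && ((j == i :> nat) ==> (h ^+ m == 1)).
Proof.
move=> tD; rewrite (@Hset_memP p d i m t _ (rowD0 hp j h0) tD).
apply/idP/idP.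
  by move/forallP/(_ j); rewrite mxE eqxx.
move=> /andP [c1 c2]; apply/forallP => k; rewrite mxE; case: ifP => [/eqP ->|_].
  by rewrite c1 c2.
by rewrite eqxx expr1n !implybT.
Qed.

Lemma tw_diagT (p d : nat) (hp : prime p) (j : 'I_d) (h : 'F_p) (h0 : h != 0)
   (t : {perm 'rV['F_p]_d}) :
  (forall v, t v = v *m diag_mx (rowD j h)) -> t \in diagT p d.
Proof.
move=> tD; rewrite inE; apply/existsP; exists (rowD j h); rewrite rowD0 //=.
by apply/forallP => v; rewrite tD.
Qed.

Lemma prim_m (p m : nat) (hp : prime p) : (m %| p.-1)%N ->
  exists h : 'F_p, m.-primitive_root h.
Proof.
move=> mdv; have [g gp] := Fp_prim hp.
by exists (g ^+ (p.-1 %/ m)); apply: dvdn_prim_root.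
Qed.

Lemma prim_ne1 (p m m' : nat) (h : 'F_p) : m.-primitive_root h ->
  (0 < m')%N -> (m' < m)%N -> h ^+ m' != 1.
Proof.
move=> hp m0 lt; rewrite -(prim_order_dvd hp); apply/negP => /(dvdn_leq m0).
by rewrite leqNgt lt.
Qed.

Lemma prim_neq0 (p m : nat) (h : 'F_p) : m.-primitive_root h -> (0 < m)%N -> h != 0.
Proof. by move=> hp m0; rewrite (prim_root_eq0 hp) -lt0n. Qed.

Lemma S0 (p d m : nat) (hp : prime p) (hd : (0 < d)%N) :
  (0 < m)%N -> (m < p.-1)%N -> Hset p d 0 m \proper diagT p d.
Proof.
move=> m0 lt; rewrite properE Hset_sub /=.
have [g gp] := prim_m hp (dvdnn p.-1).
have g0 := prim_neq0 gp (ltn_trans m0 lt).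
have [t tD] := tw_ex hp (Ordinal hd) g0.
apply/subsetPn; exists t; first exact: tw_diagT tD.
by rewrite (tw_mem _ _ hp g0 tD) /= (negbTE (prim_ne1 gp m0 lt)).
Qed.

Lemma S1 (p d i m m' : nat) (hp : prime p) (hi : (i < d)%N) :
  (m' %| m)%N -> (m %| p.-1)%N -> (0 < m')%N -> (m' < m)%N ->
  Hset p d i m' \proper Hset p d i m.
Proof.
move=> dv mdv m0 lt; rewrite properE; apply/andP; split.
  apply/subsetP => t; rewrite !inE => /existsP [D /and3P [D0 tD c]].
  apply/existsP; exists D; rewrite D0 tD /=; apply/forallP => k.
  have /andP [c1 c2] := forallP c k; rewrite c1 /=; apply/implyP => /(implyP c2).
  by move/eqP => e; rewrite -(divnK dv) mulnC exprM e expr1n.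
have [h hp'] := prim_m hp mdv.
have h0 := prim_neq0 hp' (ltn_trans m0 lt).
have [t tD] := tw_ex hp (Ordinal hi) h0.
apply/subsetPn; exists t.
  by rewrite (tw_mem _ _ hp h0 tD) /= ltnn eqxx /= prim_expr_order.
by rewrite (tw_mem _ _ hp h0 tD) /= ltnn eqxx /= (negbTE (prim_ne1 hp' m0 lt)).
Qed.

Lemma S2 (p d i m' : nat) (hp : prime p) (hi : (i.+1 < d)%N) :
  (0 < m')%N -> (m' < p.-1)%N ->
  Hset p d i.+1 m' \proper Hset p d i 1.
Proof.
move=> m0 lt; rewrite properE; apply/andP; split.
  apply/subsetP => t; rewrite !inE => /existsP [D /and3P [D0 tD c]].
  apply/existsP; exists D; rewrite D0 tD /=; apply/forallP => k.
  have /andP [c1 c2] := forallP c k.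
  apply/andP; split; apply/implyP => hk.
    by apply: (implyP c1); rewrite ltnS ltnW.
  by rewrite expr1; apply: (implyP c1); rewrite ltnS (eqP hk).
have [g gp] := prim_m hp (dvdnn p.-1).
have g0 := prim_neq0 gp (ltn_trans m0 lt).
have [t tD] := tw_ex hp (Ordinal hi) g0.
apply/subsetPn; exists t.
  by rewrite (tw_mem _ _ hp g0 tD) /= ltnNge leqnSn /= eqn_leq ltnn.
by rewrite (tw_mem _ _ hp g0 tD) /= ltnn eqxx /= (negbTE (prim_ne1 gp m0 lt)).
Qed.

Lemma Sfin (p d : nat) (hp : prime p) (hd : (0 < d)%N) :
  Hset p d d.-1 1 = [set 1%g].
Proof.
apply/setP => t; rewrite in_set1; apply/idP/idP.
  rewrite inE => /existsP [D /and3P [D0 /forallP tD c]].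
  apply/eqP/permP => v; rewrite perm1 (eqP (tD v)); apply/rowP => k.
  rewrite (mulD_entry v); have /andP [c1 c2] := forallP c k.
  have : (k < d.-1)%N || (k == d.-1 :> nat).
    by rewrite orbC -leq_eqVlt -ltnS prednK.
  case/orP => hk; first by rewrite (eqP (implyP c1 hk)) mulr1 (ord1 ord0).
  by move: (implyP c2 hk); rewrite expr1 => /eqP ->; rewrite mulr1.
move/eqP => ->; rewrite inE; apply/existsP; exists (const_mx 1).
apply/and3P; split.
- by apply/forallP => k; rewrite mxE oner_neq0.
- apply/forallP => v; rewrite perm1; apply/eqP/rowP => k.
  by rewrite (mulD_entry v) mxE mulr1.
- by apply/forallP => k; rewrite mxE (expr1n _ 1) eqxx !implybT.
Qed.

Local Close Scope ring_scope.

Lemma chain_gen (p d : nat) (hp : prime p) (hd : (0 < d)%N) (r : nat) (M : nat -> nat) :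
  (0 < r)%N -> M 0%N = p.-1 -> M r = 1%N ->
  (forall s, (s < r)%N -> (M s.+1 %| M s)%N /\ (M s.+1 < M s)%N) ->
  (forall s, (s < r)%N -> (M s.+1 == 1)%N || (7 <= p)%N) ->
  exists Y : nat -> {set {perm 'rV['F_p]_d}},
    [/\ capconj (Y 1%N) \proper diagT p d,
        (forall k, (1 <= k < d * r)%N -> capconj (Y k.+1) \proper capconj (Y k))
      & capconj (Y (d * r)%N) = [set 1%g]].
Proof.
move=> r0 M0 Mr HM Hc.
have p1 : (0 < p.-1)%N by rewrite -ltnS prednK ?prime_gt1 ?prime_gt0.
have Mdv : forall s, (s <= r)%N -> (M s %| p.-1)%N.
  elim=> [|s IH] hs; first by rewrite M0.
  have [dv _] := HM s hs.
  exact: dvdn_trans dv (IH (ltnW hs)).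
have Mpos : forall s, (s <= r)%N -> (0 < M s)%N.
  by move=> s hs; apply: dvdn_gt0 p1 (Mdv s hs).
pose Y k := Yset p d (k.-1 %/ r) (M (k.-1 %% r).+1).
have CE : forall k, (k < d * r)%N ->
    capconj (Y k.+1) = Hset p d (k %/ r) (M (k %% r).+1).
  move=> k hk; rewrite /Y /=; apply: capconjE => //.
  - by rewrite ltn_divLR // mulnC.
  - by apply: Mpos; rewrite ltn_pmod.
  - by apply: Mdv; rewrite ltn_pmod.
  - by apply: Hc; rewrite ltn_pmod.
have dr0 : (0 < d * r)%N by rewrite muln_gt0 hd r0.
exists Y; split.
- rewrite (CE 0%N dr0) div0n mod0n; apply: S0 => //.
    by apply: Mpos.
  by rewrite -M0; have [_ ->] := HM 0%N r0.
- move=> k /andP [k1 kdr].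
  have k' : k = k.-1.+1 by rewrite prednK.
  rewrite (CE k kdr) [in X in _ \proper X]k' (CE (k.-1)%N (leq_ltn_trans (leq_pred k) kdr)).
  set q := k.-1 %/ r; set s := k.-1 %% r.
  have ek : k = (q * r + s.+1)%N by rewrite k' /q /s {1}(divn_eq k.-1 r) addnS.
  have sr : (s < r)%N by rewrite ltn_pmod.
  have qd : (q < d)%N.
    by rewrite /q ltn_divLR //; apply: leq_ltn_trans (leq_pred k) kdr.
  have [ssr|ssr] := ltnP s.+1 r.
  + have -> : k %/ r = q by rewrite ek divnMDl // divn_small // addn0.
    have -> : k %% r = s.+1 by rewrite ek modnMDl modn_small.
    have [dv lt] := HM s.+1 ssr.
    apply: S1 => //.
    * by apply: Mdv.
    * by apply: Mpos.
  + have sr' : s.+1 = r by apply/eqP; rewrite eqn_leq sr ssr.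
    have ek2 : k = (q.+1 * r)%N by rewrite ek sr' mulSn addnC.
    have -> : k %/ r = q.+1 by rewrite ek2 mulnK.
    have -> : k %% r = 0%N by rewrite ek2 modnMl.
    rewrite sr' Mr; apply: S2 => //.
    * by move: kdr; rewrite ek2 ltn_pmul2r.
    * by apply: Mpos.
    * by rewrite -M0; have [_ ->] := HM 0%N r0.
- have e : (d * r)%N = (d * r).-1.+1 by rewrite prednK.
  rewrite e CE ?prednK ?leqnn //.
  have ed : (d * r).-1 = d.-1 * r + r.-1 by move: hd r0; clear; nia.
  rewrite ed divnMDl // divn_small ?prednK // addn0 modnMDl modn_small ?prednK // Mr.
  exact: Sfin.
Qed.

Definition qs (n : nat) : seq nat := flatten [seq nseq (logn q n) q | q <- primes n].

Lemma size_qs n : size (qs n) = Omega n.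
Proof.
rewrite /qs size_flatten /shape -map_comp sumnE big_map /Omega.
by apply: eq_bigr => q _; rewrite /= size_nseq.
Qed.

Lemma prod_qs n : 0 < n -> \prod_(q <- qs n) q = n.
Proof.
move=> n0; rewrite /qs big_flatten /= big_map [RHS](prod_prime_decomp n0) prime_decompE big_map.
by apply: eq_bigr => q _; rewrite big_nseq iter_muln_1.
Qed.

Lemma prime_qs n q : q \in qs n -> prime q.
Proof.
case/flattenP => s /mapP [q' hq' ->]; rewrite mem_nseq => /andP [_ /eqP ->].
by move: hq'; rewrite mem_primes => /andP [].
Qed.

Theorem lemma3p7 (p d : nat) (hp : prime p) (hp3 : 3 <= p) (hd : 1 <= d)
    (hpd : 7 <= p ^ d) :
  exists Y : nat -> {set {perm 'rV['F_p]_d}},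
    [/\ capconj (Y 1) \proper diagT p d,
        (forall k, 1 <= k < l2 p d -> capconj (Y k.+1) \proper capconj (Y k))
      & capconj (Y (l2 p d)) = [set 1%g]].
Proof.
rewrite /l2; case: ifP => h35.
  move: (@chain_gen p d hp hd 1 (fun s => if s == 0 then p.-1 else 1)).
  rewrite muln1; apply => //.
    move=> s; rewrite ltnS leqn0 => /eqP -> /=; split; first exact: dvd1n.
    by rewrite -ltnS prednK ?prime_gt0 //; apply: leq_ltn_trans hp3.
have p7 : 7 <= p.
  move/negbT: h35; rewrite negb_or => /andP [h3 h5].
  case: p hp hp3 h3 h5 {hpd} => [|[|[|[|[|[|[|p]]]]]]] //.
have p1 : 0 < p.-1 by rewrite -ltnS prednK ?prime_gt0 //; apply: leq_ltn_trans hp3.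
set Q := qs p.-1.
have hQ : \prod_(q <- Q) q = p.-1 by apply: prod_qs.
have sQ : size Q = Omega p.-1 by apply: size_qs.
have Mdv : forall s, \prod_(q <- drop s Q) q %| p.-1.
  by move=> s; rewrite -hQ -{2}(cat_take_drop s Q) big_cat /= dvdn_mull.
apply: (@chain_gen p d hp hd (Omega p.-1) (fun s => \prod_(q <- drop s Q) q)) => /=.
- rewrite -sQ lt0n size_eq0; apply/eqP => Q0.
  by move: hQ; rewrite Q0 big_nil => e; move: p7; rewrite -(prednK (prime_gt0 hp)) -e.
- by rewrite drop0.
- by rewrite -sQ drop_size big_nil.
- move=> s; rewrite -sQ => hs; rewrite (drop_nth 0 hs) big_cons; split.
    exact: dvdn_mull.
  apply: ltn_Pmull.
    by apply: prime_gt1; apply: (prime_qs (n:=p.-1)); rewrite mem_nth.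
  exact: dvdn_gt0 p1 (Mdv s.+1).
- by move=> s _; rewrite p7 orbT.
Qed.
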